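(* For $\kappa=2,3,\dots$ and all $\mathrm b\in\mathbb R$, on the line $\mathbf C_{a^\kappa}=\{(\zeta_\kappa,\mathrm b):\mathrm b\in\mathbb R\}$ one has $\rho(\zeta_\kappa,\mathrm b)=\kappa\,\theta(\zeta_\kappa,\mathrm b)$ and $$\theta(\zeta_\kappa,\mathrm b)=\begin{cases}0,&\mathrm b>2,\\[2pt] \dfrac{\arccos(\mathrm b/2)}{\kappa\arccos(\mathrm b/2)+\pi},&|\mathrm b|\le2,\\[6pt] \dfrac1{\kappa+1},&\mathrm b<-2.\end{cases}$$ Symmetrically, for $\ell\ge2$, on the line $\mathbf C_{b^\ell}=\{(\mathrm a,\zeta_\ell):\mathrm a\in\mathbb R\}$ one has $\theta(\mathrm a,\zeta_\ell)=\theta(\zeta_\ell,\mathrm a)$ (given by the same formula with $\mathrm b$ replaced by $\mathrm a$ and $\kappa$ by $\ell$) and $\rho(\mathrm a,\zeta_\ell)=1-\rho(\zeta_\ell,\mathrm a)$.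
   Context: For real parameters $\mathrm a,\mathrm b$, the map $F:\mathbb R^2\to\mathbb R^2$ is $F(x,y)=(\mathrm a x-y,x)$ if $x>0$ or ($x=0$ and $y\le0$), and $F(x,y)=(\mathrm b x-y,x)$ otherwise. $\zeta_j=2\cos(\pi/j)$. To an $F$-orbit $(z_t)$ associate the word $W=w_0w_1\cdots$ with $w_t=a$ if $z_t$ lies in the open right half-plane or on the negative $y$-axis, and $w_t=b$ otherwise. $W_n$ is the length-$n$ prefix, and $|W_n|_u$ counts occurrences of the factor $u$. The rotation number is $\theta(\mathrm a,\mathrm b)=\lim_n\frac1n|W_n|_{ab}$ (independent of the orbit). The density is $\rho(\mathrm a,\mathrm b)=\lim_n\frac1{2n}(|W_n^+|_a+|W_n^-|_a)$, with $W^\pm$ the word of the orbit of $(0,\pm1)$. *)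

(* Defs.v *)
From Stdlib Require Import Reals Lra Bool.
Open Scope R_scope.

Definition in_a (p : R * R) : bool :=
  let (x, y) := p in
  if Rlt_dec 0 x then true
  else if Req_EM_T x 0 then (if Rle_dec y 0 then true else false)
  else false.

Definition Fmap (a b : R) (p : R * R) : R * R :=
  let (x, y) := p in
  if in_a p then (a * x - y, x) else (b * x - y, x).

Fixpoint orb (a b : R) (z0 : R * R) (t : nat) : R * R :=
  match t with
  | O => z0
  | S t' => Fmap a b (orb a b z0 t')
  end.

Definition letter_a (a b : R) (z0 : R * R) (t : nat) : bool :=
  in_a (orb a b z0 t).

(* |W_n|_{ab}: number of t with t+1 < n, w_t = a and w_{t+1} = b *)
Fixpoint count_ab (a b : R) (z0 : R * R) (n : nat) : nat :=
  match n with
  | O => O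
  | S m => (count_ab a b z0 m +
            match m with
            | O => O
            | S k => if andb (letter_a a b z0 k) (negb (letter_a a b z0 m))
                     then 1 else 0
            end)%nat
  end.

Fixpoint count_a (a b : R) (z0 : R * R) (n : nat) : nat :=
  match n with
  | O => O
  | S m => (count_a a b z0 m + if letter_a a b z0 m then 1 else 0)%nat
  end.

Definition theta_seq (a b : R) (z0 : R * R) (n : nat) : R :=
  INR (count_ab a b z0 n) / INR n.

Definition rho_seq (a b : R) (n : nat) : R :=
  (INR (count_a a b (0, 1) n) + INR (count_a a b (0, -1) n)) / (2 * INR n).

Definition zeta (j : nat) : R := 2 * cos (PI / INR j).

Definition theta_val (k : nat) (b : R) : R :=
  if Rlt_dec 2 b then 0
  else if Rlt_dec b (-2) then 1 / (INR k + 1)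
  else acos (b / 2) / (INR k * acos (b / 2) + PI).

(* Main.v *)
Require Import Defs.
From Stdlib Require Import Reals Lra Lia Bool Arith Classical.
Open Scope R_scope.

Lemma in_a_true x y : in_a (x, y) = true <-> (0 < x \/ (x = 0 /\ y <= 0)).
Proof.
  unfold in_a.
  destruct (Rlt_dec 0 x); [split; auto|].
  destruct (Req_EM_T x 0); destruct (Rle_dec y 0); split; intros H; try discriminate; auto;
  destruct H as [H|[H1 H2]]; lra.
Qed.

Lemma in_a_false x y : in_a (x, y) = false <-> (x < 0 \/ (x = 0 /\ 0 < y)).
Proof.
  split; intros H.
  - destruct (in_a (x,y)) eqn:E; [discriminate|].
    destruct (Rlt_dec x 0); [auto|].
    destruct (Req_EM_T x 0).
    + right; split; auto. destruct (Rlt_dec 0 y); auto.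
      exfalso. assert (in_a (x,y) = true) by (apply in_a_true; right; lra). congruence.
    + exfalso. assert (in_a (x,y) = true) by (apply in_a_true; left; lra). congruence.
  - destruct (in_a (x,y)) eqn:E; auto. apply in_a_true in E. lra.
Qed.

Lemma Fmap_a a b x y : in_a (x,y) = true -> Fmap a b (x,y) = (a*x - y, x).
Proof. intros H. unfold Fmap. rewrite H. reflexivity. Qed.
Lemma Fmap_b a b x y : in_a (x,y) = false -> Fmap a b (x,y) = (b*x - y, x).
Proof. intros H. unfold Fmap. rewrite H. reflexivity. Qed.

Definition negz (p : R * R) : R * R := (- fst p, - snd p).

Lemma in_a_neg z : z <> (0,0) -> in_a (negz z) = negb (in_a z).
Proof.
  destruct z as [x y]; intros Hz; unfold negz; cbn [fst snd].
  destruct (in_a (x,y)) eqn:E; cbn [negb].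
  - apply in_a_true in E. apply in_a_false.
    destruct E as [E|[E1 E2]]; [lra|].
    subst. right. split; [lra|]. destruct (Req_EM_T y 0); [subst; elim Hz; reflexivity|lra].
  - apply in_a_false in E. apply in_a_true. lra.
Qed.

Lemma Fmap_nz a b z : z <> (0,0) -> Fmap a b z <> (0,0).
Proof.
  destruct z as [x y]; intros Hz H. unfold Fmap in H.
  destruct (in_a (x,y)); injection H; intros H1 H2; subst;
  apply Hz; f_equal; lra.
Qed.

Lemma orb_nz a b z0 t : z0 <> (0,0) -> orb a b z0 t <> (0,0).
Proof. intros H; induction t; simpl; auto. apply Fmap_nz; auto. Qed.

Lemma neg_nz z : z <> (0,0) -> negz z <> (0,0).
Proof. destruct z as [x y]; unfold negz; simpl; intros H E; injection E; intros; apply H; f_equal; lra. Qed.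

Lemma Fmap_neg a b z : z <> (0,0) -> Fmap a b (negz z) = negz (Fmap b a z).
Proof.
  intros Hz. pose proof (in_a_neg z Hz) as E.
  destruct z as [x y]. unfold negz in *; cbn [fst snd] in *. unfold Fmap.
  rewrite E. destruct (in_a (x,y)); simpl; f_equal; ring.
Qed.

Lemma orb_neg a b z0 t : z0 <> (0,0) -> orb a b (negz z0) t = negz (orb b a z0 t).
Proof.
  intros Hz; induction t; simpl; auto.
  rewrite IHt. apply Fmap_neg. apply orb_nz; auto.
Qed.

Lemma letter_neg a b z0 t : z0 <> (0,0) -> letter_a a b (negz z0) t = negb (letter_a b a z0 t).
Proof.
  intros Hz. unfold letter_a. rewrite orb_neg by auto. apply in_a_neg, orb_nz; auto.
Qed.

Fixpoint cab (w : nat -> bool) (n : nat) : nat :=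
  match n with
  | O => O
  | S m => (cab w m + match m with O => O | S k => if andb (w k) (negb (w m)) then 1 else 0 end)%nat
  end.
Fixpoint cba (w : nat -> bool) (n : nat) : nat :=
  match n with
  | O => O
  | S m => (cba w m + match m with O => O | S k => if andb (negb (w k)) (w m) then 1 else 0 end)%nat
  end.
Fixpoint ca (w : nat -> bool) (n : nat) : nat :=
  match n with
  | O => O
  | S m => (ca w m + if w m then 1 else 0)%nat
  end.

Lemma count_ab_eq a b z0 n : count_ab a b z0 n = cab (letter_a a b z0) n.
Proof. induction n; simpl; auto. Qed.
Lemma count_a_eq a b z0 n : count_a a b z0 n = ca (letter_a a b z0) n.
Proof. induction n; simpl; auto. Qed.

Lemma cab_S w n : cab w (S (S n)) = (cab w (S n) + if andb (w n) (negb (w (S n))) then 1 else 0)%nat.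
Proof. reflexivity. Qed.

Lemma cab_mono w n : (cab w n <= cab w (S n) <= S (cab w n))%nat.
Proof. destruct n; simpl; [lia|]. destruct (w n && negb (w (S n))); lia. Qed.
Lemma ca_mono w n : (ca w n <= ca w (S n) <= S (ca w n))%nat.
Proof. simpl. destruct (w n); lia. Qed.

Lemma lip_gen (f : nat -> nat) : (forall n, f n <= f (S n) <= S (f n))%nat ->
  forall i j, (i <= j)%nat -> (f i <= f j <= f i + (j - i))%nat.
Proof.
  intros H i j Hij. induction Hij; [lia|]. specialize (H m). lia.
Qed.

Lemma lipR (f : nat -> nat) : (forall n, f n <= f (S n) <= S (f n))%nat ->
  forall i j, Rabs (INR (f i) - INR (f j)) <= Rabs (INR i - INR j).
Proof.
  intros H i j. destruct (le_lt_dec i j) as [h|h].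
  - pose proof (lip_gen f H i j h). rewrite (Rabs_left1 (INR i - INR j)), Rabs_left1.
    + assert (INR (f j) <= INR (f i) + INR (j - i)) by (rewrite <- plus_INR; apply le_INR; lia).
      rewrite minus_INR in H1 by lia. lra.
    + apply Rle_minus, le_INR; lia.
    + apply Rle_minus, le_INR; lia.
  - assert (h' : (j <= i)%nat) by lia. pose proof (lip_gen f H j i h').
    rewrite (Rabs_right (INR i - INR j)), Rabs_right.
    + assert (INR (f i) <= INR (f j) + INR (i - j)) by (rewrite <- plus_INR; apply le_INR; lia).
      rewrite minus_INR in H1 by lia. lra.
    + apply Rle_ge. pose proof (le_INR _ _ (proj1 H0)). lra.
    + pose proof (le_INR _ _ h'). lra.
Qed.

Lemma ca_neg w n : (ca (fun t => negb (w t)) n + ca w n = n)%nat.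
Proof. induction n; simpl; auto. destruct (w n); simpl; lia. Qed.

Lemma cab_neg w n : cab (fun t => negb (w t)) n = cba w n.
Proof.
  induction n; simpl; auto. rewrite IHn. destruct n; auto.
  destruct (w n), (w (S n)); reflexivity.
Qed.

Lemma cab_cba w n : (1 <= n)%nat ->
  (Z.of_nat (cab w n) - Z.of_nat (cba w n) = (if w 0%nat then 1 else 0) - (if w (pred n) then 1 else 0))%Z.
Proof.
  intros H. induction H; simpl.
  - destruct (w 0%nat); reflexivity.
  - destruct m; [lia|]. simpl in IHle |- *.
    destruct (w m) eqn:E1, (w (S m)) eqn:E2, (w 0%nat); simpl in *; lia.
Qed.


Lemma cab_cba_R w n : Rabs (INR (cab w n) - INR (cba w n)) <= 1.
Proof.
  destruct n. simpl. rewrite Rminus_0_r, Rabs_R0; lra.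
  pose proof (cab_cba w (S n) ltac:(lia)).
  rewrite !INR_IZR_INZ. rewrite <- minus_IZR. rewrite H.
  destruct (w 0%nat), (w (pred (S n))); simpl;
  unfold Rabs; destruct Rcase_abs; lra.
Qed.

Section Trig.
Variable k : nat.
Hypothesis Hk : (2 <= k)%nat.

Let al := PI / INR k.
Definition Sf (u : R) := sin (u * (PI / INR k)).

Lemma INRk_pos : 2 <= INR k.
Proof. replace 2 with (INR 2) by (simpl; lra). apply le_INR; auto. Qed.

Lemma al_bounds : 0 < PI / INR k <= PI / 2.
Proof.
  pose proof INRk_pos. pose proof PI_RGT_0. split.
  - apply Rdiv_lt_0_compat; lra.
  - unfold Rdiv. apply Rmult_le_compat_l; [lra|]. apply Rinv_le_contravar; lra.
Qed.

Lemma Sf_rec u : Sf (u + 1) + Sf (u - 1) = zeta k * Sf u.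
Proof.
  unfold Sf, zeta. rewrite Rmult_plus_distr_r, Rmult_minus_distr_r, Rmult_1_l, sin_plus, sin_minus. ring.
Qed.

Lemma Sf_at_j j : (1 <= j <= k - 1)%nat -> 0 < Sf (INR j).
Proof.
  intros Hj. pose proof INRk_pos. pose proof PI_RGT_0. unfold Sf. apply sin_gt_0.
  - apply Rmult_lt_0_compat. apply lt_0_INR; lia. apply al_bounds.
  - assert (INR j <= INR k - 1). { replace 1 with (INR 1) by reflexivity. rewrite <- minus_INR by lia. apply le_INR; lia. }
    replace (INR j * (PI / INR k)) with (PI * (INR j / INR k)) by (field; lra).
    assert (INR j / INR k < 1). { apply (Rmult_lt_reg_r (INR k)); [lra|]. unfold Rdiv. rewrite Rmult_assoc, Rinv_l by lra. lra. }
    assert (0 <= INR j / INR k) by (unfold Rdiv; apply Rmult_le_pos; [apply pos_INR|apply Rlt_le, Rinv_0_lt_compat; lra]).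
    nra.
Qed.

Lemma Sf_1 : 0 < Sf 1.
Proof. replace 1 with (INR 1) by reflexivity. apply Sf_at_j. lia. Qed.

Lemma Sf_k : Sf (INR k) = 0.
Proof. pose proof INRk_pos. unfold Sf. replace (INR k * (PI / INR k)) with PI by (field; lra). apply sin_PI. Qed.

Lemma Sf_k1 : Sf (INR k + 1) = - Sf 1.
Proof. pose proof INRk_pos. unfold Sf. replace ((INR k + 1) * (PI / INR k)) with (1 * (PI / INR k) + PI) by (field; lra). apply neg_sin. Qed.

Lemma Sf_km1 : Sf (INR k - 1) = Sf 1.
Proof. pose proof INRk_pos. unfold Sf. replace ((INR k - 1) * (PI / INR k)) with (PI - 1 * (PI / INR k)) by (field; lra). apply sin_PI_x. Qed.

Lemma Sf_0 : Sf 0 = 0.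
Proof. unfold Sf. rewrite Rmult_0_l. apply sin_0. Qed.
Lemma Sf_m1 : Sf (-1) = - Sf 1.
Proof. unfold Sf. rewrite <- sin_neg. f_equal. ring. Qed.

Lemma Sf_nneg j : (j <= k)%nat -> 0 <= Sf (INR j).
Proof.
  intros Hj. destruct j. simpl. rewrite Sf_0; lra.
  destruct (Nat.eq_dec (S j) k). rewrite e, Sf_k; lra.
  apply Rlt_le, Sf_at_j. lia.
Qed.

Definition Aj (j : nat) (z : R * R) : R * R :=
  ((fst z * Sf (INR j + 1) - snd z * Sf (INR j)) / Sf 1,
   (fst z * Sf (INR j) - snd z * Sf (INR j - 1)) / Sf 1).

Lemma Aj_0 z : Aj 0 z = z.
Proof.
  pose proof Sf_1. destruct z as [x y]. unfold Aj; cbn [fst snd INR].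
  rewrite Rplus_0_l, Sf_0. replace (0 - 1) with (-1) by ring. rewrite Sf_m1. f_equal; field; lra.
Qed.

Lemma Aj_k z : Aj k z = negz z.
Proof.
  pose proof Sf_1. destruct z as [x y]. unfold Aj, negz; cbn [fst snd].
  rewrite Sf_k, Sf_k1, Sf_km1. f_equal; field; lra.
Qed.

Lemma Aj_step b j z : in_a (Aj j z) = true -> Fmap (zeta k) b (Aj j z) = Aj (S j) z.
Proof.
  intros H. pose proof Sf_1. remember (Aj j z) as p eqn:Ep. destruct p as [X Y].
  rewrite Fmap_a by exact H. unfold Aj in Ep. injection Ep; intros EY EX. rewrite EX, EY.
  unfold Aj. cbn [fst snd]. rewrite S_INR.
  replace (INR j + 1 - 1) with (INR j) by ring.
  pose proof (Sf_rec (INR j + 1)) as R1. replace (INR j + 1 - 1) with (INR j) in R1 by ring.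
  pose proof (Sf_rec (INR j)) as R2.
  f_equal.
  replace (Sf (INR j + 1 + 1)) with (zeta k * Sf (INR j + 1) - Sf (INR j)) by lra.
  replace (Sf (INR j - 1)) with (zeta k * Sf (INR j) - Sf (INR j + 1)) by lra.
  field; lra.
Qed.

Lemma G1 b z0 t j : (j <= k)%nat ->
  (forall i, (i < j)%nat -> in_a (orb (zeta k) b z0 (t + i)) = true) ->
  orb (zeta k) b z0 (t + j) = Aj j (orb (zeta k) b z0 t).
Proof.
  induction j; intros Hj Hi.
  - rewrite Nat.add_0_r, Aj_0; reflexivity.
  - rewrite Nat.add_succ_r. simpl. rewrite IHj by (try lia; intros; apply Hi; lia).
    apply Aj_step. rewrite <- IHj by (try lia; intros; apply Hi; lia). apply Hi; lia.
Qed.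

Lemma G2 b z0 t : let z := orb (zeta k) b z0 t in
  in_a z = true -> snd z < 0 ->
  (forall j, (j < k)%nat -> letter_a (zeta k) b z0 (t + j) = true) /\
  orb (zeta k) b z0 (t + k) = negz z /\ letter_a (zeta k) b z0 (t + k) = false.
Proof.
  intros z Ha Hy.
  assert (Hx : 0 <= fst z). { destruct z as [x y] eqn:E. apply in_a_true in Ha. simpl. lra. }
  assert (Hz : z <> (0,0)). { intros E. rewrite E in Hy. simpl in Hy. lra. }
  assert (HA0 : forall n j, (j <= n)%nat -> (j < k)%nat -> in_a (orb (zeta k) b z0 (t + j)) = true).
  { induction n; intros j Hjn Hj.
    - replace j with 0%nat by lia. rewrite Nat.add_0_r. exact Ha.
    - destruct (Nat.eq_dec j (S n)) as [->|Hne]; [|apply IHn; lia].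
      rewrite G1 by (try lia; intros; apply IHn; lia). fold z.
      unfold Aj. apply in_a_true. left. pose proof Sf_1.
      apply Rdiv_lt_0_compat; auto.
      pose proof (Sf_nneg (S (S n)) ltac:(lia)). rewrite S_INR in H0.
      pose proof (Sf_at_j (S n) ltac:(lia)).
      rewrite S_INR in *. nra. }
  assert (HA : forall j, (j < k)%nat -> in_a (orb (zeta k) b z0 (t + j)) = true) by (intros; eapply HA0; eauto).
  split; [exact HA|].
  assert (E : orb (zeta k) b z0 (t + k) = negz z) by (rewrite G1 by (auto; lia); apply Aj_k).
  split; auto. unfold letter_a. rewrite E, in_a_neg, Ha; auto.
Qed.

Lemma G3 b z0 t : z0 <> (0,0) -> exists j, (j <= k)%nat /\ letter_a (zeta k) b z0 (t + j) = false.
Proof.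
  intros Hz0. apply NNPP; intros Hn.
  assert (HA : forall j, (j <= k)%nat -> letter_a (zeta k) b z0 (t + j) = true).
  { intros j Hj. destruct (letter_a (zeta k) b z0 (t + j)) eqn:E; auto. exfalso; apply Hn; eauto. }
  assert (E : orb (zeta k) b z0 (t + k) = negz (orb (zeta k) b z0 t)).
  { rewrite G1; [apply Aj_k|lia|]. intros i Hi. apply HA; lia. }
  pose proof (HA k (le_n _)). unfold letter_a in H. rewrite E, in_a_neg in H by (apply orb_nz; auto).
  pose proof (HA 0%nat ltac:(lia)). rewrite Nat.add_0_r in H0. unfold letter_a in H0. rewrite H0 in H. discriminate.
Qed.
Lemma macro b z0 t : letter_a (zeta k) b z0 t = false ->
  letter_a (zeta k) b z0 (S t) = false \/
  ((forall j, (1 <= j <= k)%nat -> letter_a (zeta k) b z0 (t + j) = true) /\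
   letter_a (zeta k) b z0 (t + k + 1) = false /\
   orb (zeta k) b z0 (t + k + 1) = negz (orb (zeta k) b z0 (S t))).
Proof.
  intros Hb. destruct (letter_a (zeta k) b z0 (S t)) eqn:E; [right|left; auto].
  unfold letter_a in Hb, E. simpl in E.
  destruct (orb (zeta k) b z0 t) as [x y] eqn:Ez.
  rewrite Fmap_b in E by exact Hb. apply in_a_false in Hb.
  assert (Hy : x < 0).
  { destruct Hb as [Hb|[Hb1 Hb2]]; auto. subst x.
    assert (in_a (b * 0 - y, 0) = false) by (apply in_a_false; left; lra). congruence. }
  assert (He : orb (zeta k) b z0 (S t) = (b * x - y, x)).
  { cbn [orb]. rewrite Ez, Fmap_b; auto. apply in_a_false; lra. }
  pose proof (G2 b z0 (S t)) as G. cbv zeta in G. rewrite He in G.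
  destruct (G E ltac:(simpl; lra)) as [G1' [G2' G3']].
  split; [|split].
  - intros j Hj. replace (t + j)%nat with (S t + (j - 1))%nat by lia. apply G1'; lia.
  - replace (t + k + 1)%nat with (S t + k)%nat by lia. exact G3'.
  - replace (t + k + 1)%nat with (S t + k)%nat by lia. rewrite G2', He. reflexivity.
Qed.
End Trig.

Lemma reach (w : nat -> bool) (k : nat) (P : nat -> Prop) t0 :
  (forall t, w t = false -> w (S t) = false \/
     ((forall j, (1 <= j <= k)%nat -> w (t + j)%nat = true) /\ w (t + k + 1)%nat = false)) ->
  w t0 = false -> P t0 ->
  (forall t, w t = false -> P t -> w (S t) = false -> P (S t)) ->
  (forall t, w t = false -> P t -> (forall j, (1 <= j <= k)%nat -> w (t + j)%nat = true) ->
     w (t + k + 1)%nat = false -> P (t + k + 1)%nat) ->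
  forall n, (t0 <= n)%nat -> exists g, (t0 <= g <= n)%nat /\ (n <= g + k)%nat /\ w g = false /\ P g.
Proof.
  intros Hm Hw0 HP0 Hs Hl.
  assert (H : forall n, (t0 <= n)%nat -> exists g, (t0 <= g <= n)%nat /\ w g = false /\ P g /\
            forall j, (g < j <= n)%nat -> w j = true).
  { intros n Hn. induction Hn.
    - exists t0. repeat split; auto; intros; lia.
    - destruct IHHn as [g [Hg [Hwg [HPg Hall]]]].
      destruct (w (S m)) eqn:E.
      + exists g. repeat split; auto; try lia. intros j Hj.
        destruct (Nat.eq_dec j (S m)) as [->|]; auto. apply Hall; lia.
      + exists (S m). split; [lia|]. split; auto. split; [|intros; lia].
        destruct (Hm g Hwg) as [Hsh|[Hlo Hlo2]].
        * destruct (Nat.eq_dec g m) as [->|]. apply Hs; auto.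
          exfalso. assert (w (S g) = true) by (apply Hall; lia). congruence.
        * destruct (le_lt_dec (g + k + 1) m).
          { exfalso. assert (w (g + k + 1)%nat = true) by (apply Hall; lia). congruence. }
          destruct (Nat.eq_dec (S m) (g + k + 1)) as [E2|E2].
          { rewrite E2. apply Hl; auto. }
          exfalso. assert (w (g + (S m - g))%nat = true) by (apply Hlo; lia).
          replace (g + (S m - g))%nat with (S m) in H by lia. congruence. }
  intros n Hn. destruct (H n Hn) as [g [Hg [Hwg [HPg Hall]]]].
  exists g. repeat split; auto; try lia.
  destruct (Hm g Hwg) as [Hsh|[Hlo Hlo2]].
  - destruct (le_lt_dec n g); [lia|]. assert (w (S g) = true) by (apply Hall; lia). congruence.
  - destruct (le_lt_dec n (g + k)); auto. assert (w (g + k + 1)%nat = true) by (apply Hall; lia). congruence.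
Qed.

Lemma count_short w t : w t = false -> w (S t) = false ->
  cab w (S (S t)) = cab w (S t) /\ ca w (S (S t)) = ca w (S t).
Proof. intros H1 H2. rewrite cab_S.
  change (ca w (S (S t))) with (ca w (S t) + if w (S t) then 1 else 0)%nat.
  rewrite H1, H2. cbn [andb negb]. lia. Qed.

Lemma count_long w k t : (1 <= k)%nat -> w t = false ->
  (forall j, (1 <= j <= k)%nat -> w (t + j)%nat = true) -> w (t + k + 1)%nat = false ->
  cab w (S (t + k + 1)) = S (cab w (S t)) /\ ca w (S (t + k + 1)) = (ca w (S t) + k)%nat.
Proof.
  intros Hk H0 Ha Hb.
  assert (Hj : forall j, (j <= k)%nat -> cab w (S (t + j)) = cab w (S t) /\ ca w (S (t + j)) = (ca w (S t) + j)%nat).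
  { induction j; intros Hjk.
    - rewrite Nat.add_0_r. lia.
    - rewrite Nat.add_succ_r. rewrite cab_S.
      change (ca w (S (S (t + j)))) with (ca w (S (t + j)) + if w (S (t + j)) then 1 else 0)%nat.
      assert (E : w (S (t + j)) = true) by (rewrite <- Nat.add_succ_r; apply Ha; lia).
      rewrite E. cbn [negb]. rewrite andb_false_r. destruct IHj as [I1 I2]; lia. }
  destruct (Hj k (le_n _)) as [I1 I2].
  replace (t + k + 1)%nat with (S (t + k)) by lia.
  rewrite cab_S.
  change (ca w (S (S (t + k)))) with (ca w (S (t + k)) + if w (S (t + k)) then 1 else 0)%nat.
  replace (S (t + k)) with (t + k + 1)%nat by lia. rewrite Hb.
  assert (E : w (t + k)%nat = true) by (apply Ha; lia). rewrite E. cbn [andb negb].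
  replace (t + k + 1)%nat with (S (t + k)) by lia. lia.
Qed.

Lemma lim_aux (f : nat -> R) (L : R) :
  (exists K N, forall n, (N <= n)%nat -> Rabs (f n - L * INR n) <= K) ->
  Un_cv (fun n => f n / INR n) L.
Proof.
  intros [K [N HK]] eps Heps.
  assert (HK0 : 0 <= K) by (specialize (HK N (le_n _)); pose proof (Rabs_pos (f N - L * INR N)); lra).
  destruct (INR_unbounded (K / eps)) as [N1 HN1].
  exists (max (max N N1) 1). intros n Hn. unfold R_dist.
  assert (Hn0 : 0 < INR n) by (apply lt_0_INR; lia).
  assert (HN1n : INR N1 <= INR n) by (apply le_INR; lia).
  replace (f n / INR n - L) with ((f n - L * INR n) / INR n) by (field; lra).
  unfold Rdiv. rewrite Rabs_mult, Rabs_inv, (Rabs_right (INR n)) by lra.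
  specialize (HK n ltac:(lia)).
  apply (Rle_lt_trans _ (K * / INR n)).
  - apply Rmult_le_compat_r; [apply Rlt_le, Rinv_0_lt_compat; lra| exact HK].
  - apply (Rmult_lt_reg_r (INR n)); auto. rewrite Rmult_assoc, Rinv_l by lra.
    assert (K < eps * INR n).
    { assert (K / eps < INR n) by lra. apply (Rmult_lt_reg_r (/ eps)). apply Rinv_0_lt_compat; lra.
      replace (eps * INR n * / eps) with (INR n) by (field; lra). exact H. }
    lra.
Qed.

Lemma abs_le_split x K : Rabs x <= K <-> -K <= x <= K.
Proof.
  split; intros H.
  - unfold Rabs in H. destruct (Rcase_abs x); lra.
  - apply Rabs_le; lra.
Qed.

Lemma bound_prod p P d D : 0 <= p <= P -> -D <= d <= D -> -(P*D) <= p*d <= P*D.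
Proof. intros [H1 H2] [H3 H4]. split; nra. Qed.

Lemma final_lim w (k : nat) (r B : R) t0 : 0 <= r <= 1 ->
  (forall n, (t0 <= n)%nat -> exists g, (t0 <= g <= n)%nat /\ (n <= g + k)%nat /\
     INR (ca w (S g)) - INR (ca w (S t0)) = INR k * (INR (cab w (S g)) - INR (cab w (S t0))) /\
     Rabs (r * ((INR g - INR (ca w (S g))) - (INR t0 - INR (ca w (S t0)))) -
           (INR (cab w (S g)) - INR (cab w (S t0)))) <= B) ->
  Un_cv (fun n => INR (cab w n) / INR n) (r / (1 + INR k * r)) /\
  Un_cv (fun n => INR (ca w n) / INR n) (INR k * r / (1 + INR k * r)).
Proof.
  intros Hr H.
  pose proof (pos_INR k) as Hk0.
  set (q := 1 + INR k * r).
  assert (Hq : 1 <= q <= 1 + INR k) by (unfold q; split; nra).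
  set (a0 := INR (cab w (S t0))). set (c0 := INR (ca w (S t0))).
  set (K := (1 + INR k) * (INR k + 1) + B + (1 + INR k) * Rabs a0 + INR t0 + INR k).
  set (K2 := (INR k + 1) + Rabs (c0 - INR k * a0) + INR k * (INR k + 1)).
  assert (Main : forall n, (t0 <= n)%nat ->
    Rabs (q * INR (cab w n) - r * INR n) <= K /\ Rabs (INR (ca w n) - INR k * INR (cab w n)) <= K2).
  { intros n Hn. destruct (H n Hn) as [g [Hg [Hgk [Ec HE]]]].
    fold a0 c0 in Ec, HE.
    pose proof (lipR _ (cab_mono w) n (S g)) as L1.
    pose proof (lipR _ (ca_mono w) n (S g)) as L2.
    assert (Hng : Rabs (INR n - INR (S g)) <= INR k + 1).
    { rewrite S_INR. apply abs_le_split.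
      assert (INR g <= INR n) by (apply le_INR; lia).
      assert (INR n <= INR g + INR k) by (rewrite <- plus_INR; apply le_INR; lia). lra. }
    set (an := INR (cab w n)) in *. set (cn := INR (ca w n)) in *.
    set (a' := INR (cab w (S g))) in *. set (c' := INR (ca w (S g))) in *.
    assert (D1 : -(INR k + 1) <= an - a' <= INR k + 1) by (apply abs_le_split; lra).
    assert (D2 : -(INR k + 1) <= cn - c' <= INR k + 1) by (apply abs_le_split; lra).
    apply abs_le_split in HE.
    assert (Hgn : 0 <= INR n - INR g <= INR k).
    { assert (INR g <= INR n) by (apply le_INR; lia).
      assert (INR n <= INR g + INR k) by (rewrite <- plus_INR; apply le_INR; lia). lra. }
    pose proof (bound_prod q (1 + INR k) (an - a') (INR k + 1) ltac:(lra) D1) as P1.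
    pose proof (bound_prod r 1 (INR n - INR g) (INR k) Hr ltac:(lra)) as P2.
    pose proof (bound_prod (INR k) (INR k) (an - a') (INR k + 1) ltac:(lra) D1) as P3.
    assert (P4 : -((1 + INR k) * Rabs a0) <= q * a0 <= (1 + INR k) * Rabs a0).
    { apply bound_prod; [lra|]. apply abs_le_split. lra. }
    assert (P5 : 0 <= r * INR t0 <= INR t0). { pose proof (pos_INR t0). split; nra. }
    assert (Id : q * an - r * INR n = q * (an - a') - (r * ((INR g - c') - (INR t0 - c0)) - (a' - a0)) + q * a0 - r * INR t0 - r * (INR n - INR g)).
    { unfold q. replace c' with (c0 + INR k * (a' - a0)) by lra. ring. }
    split; apply abs_le_split.
    - rewrite Id. unfold K. lra.
    - assert (Id2 : cn - INR k * an = (cn - c') + (c0 - INR k * a0) - INR k * (an - a')).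
      { replace c' with (c0 + INR k * (a' - a0)) by lra. ring. }
      rewrite Id2. pose proof (abs_le_split (c0 - INR k * a0) (Rabs (c0 - INR k * a0))) as [X _].
      specialize (X (Rle_refl _)). unfold K2. lra. }
  split; apply lim_aux.
  - exists (K / q), t0. intros n Hn. destruct (Main n Hn) as [M1 _].
    replace (INR (cab w n) - r / q * INR n) with ((q * INR (cab w n) - r * INR n) / q)
      by (field; lra).
    unfold Rdiv. rewrite Rabs_mult, Rabs_inv, (Rabs_right q) by lra.
    apply Rmult_le_compat_r; [apply Rlt_le, Rinv_0_lt_compat; lra | exact M1].
  - exists (K2 + INR k * (K / q)), t0. intros n Hn. destruct (Main n Hn) as [M1 M2].
    replace (INR (ca w n) - INR k * r / q * INR n) with
      ((INR (ca w n) - INR k * INR (cab w n)) + INR k * ((q * INR (cab w n) - r * INR n) / q))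
      by (field; lra).
    eapply Rle_trans; [apply Rabs_triang|]. apply Rplus_le_compat; auto.
    rewrite Rabs_mult, (Rabs_right (INR k)) by lra. apply Rmult_le_compat_l; auto.
    unfold Rdiv. rewrite Rabs_mult, Rabs_inv, (Rabs_right q) by lra.
    apply Rmult_le_compat_r; [apply Rlt_le, Rinv_0_lt_compat; lra | exact M1].
Qed.

Theorem generic (k : nat) (Hk : (2 <= k)%nat) (b r B : R) (Q : R * R -> R -> R -> Prop) :
  0 <= r <= 1 ->
  (forall z s m, in_a z = false -> Q z s m -> in_a (Fmap (zeta k) b z) = false -> Q (Fmap (zeta k) b z) (s + 1) m) ->
  (forall z s m, in_a z = false -> Q z s m -> in_a (Fmap (zeta k) b z) = true -> Q (negz (Fmap (zeta k) b z)) (s + 1) (m + 1)) ->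
  (forall z s m, Q z s m -> Rabs (r * s - m) <= B) ->
  (forall z, z <> (0,0) -> in_a z = false -> Q z 0 0) ->
  forall z0, z0 <> (0,0) ->
  Un_cv (fun n => INR (cab (letter_a (zeta k) b z0) n) / INR n) (r / (1 + INR k * r)) /\
  Un_cv (fun n => INR (ca (letter_a (zeta k) b z0) n) / INR n) (INR k * r / (1 + INR k * r)).
Proof.
  intros Hr Hs Hl HB Hi z0 Hz0.
  set (w := letter_a (zeta k) b z0).
  destruct (G3 k Hk b z0 0 Hz0) as [t0 [_ Ht0]]. simpl in Ht0. fold w in Ht0.
  set (a0 := INR (cab w (S t0))). set (c0 := INR (ca w (S t0))).
  set (Sx := fun t => (INR t - INR (ca w (S t))) - (INR t0 - c0)).
  set (Mx := fun t => INR (cab w (S t)) - a0).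
  set (P := fun t => INR (ca w (S t)) - c0 = INR k * (INR (cab w (S t)) - a0) /\
                     Q (orb (zeta k) b z0 t) (Sx t) (Mx t)).
  assert (Hreach := reach w k P t0).
  apply (final_lim w k r B t0 Hr).
  intros n Hn. destruct Hreach with (n := n) as [g [Hg [Hgk [Hwg [HP1 HP2]]]]]; auto.
  - intros t Ht. destruct (macro k Hk b z0 t Ht) as [H|[H1 [H2 H3]]]; auto.
  - unfold P. split. unfold c0, a0; lra.
    replace (Sx t0) with 0 by (unfold Sx, c0; ring).
    replace (Mx t0) with 0 by (unfold Mx, a0; ring).
    apply Hi. apply orb_nz; auto. exact Ht0.
  - intros t Hwt [HP1 HP2] Hw1.
    destruct (count_short w t Hwt Hw1) as [E1 E2].
    split.
    + rewrite E2, E1. exact HP1.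
    + unfold Sx, Mx in *. rewrite E1, E2. cbn [orb].
      replace (INR (S t) - INR (ca w (S t)) - (INR t0 - c0)) with
        (INR t - INR (ca w (S t)) - (INR t0 - c0) + 1) by (rewrite S_INR; ring).
      apply Hs; auto.
  - intros t Hwt [HP1 HP2] Hall Hwk.
    destruct (count_long w k t ltac:(lia) Hwt Hall Hwk) as [E1 E2].
    destruct (macro k Hk b z0 t Hwt) as [H|[_ [_ H3]]].
    { exfalso. assert (w (t + 1)%nat = true) by (apply Hall; lia). rewrite Nat.add_1_r in H0. fold w in H. congruence. }
    assert (Ha : in_a (Fmap (zeta k) b (orb (zeta k) b z0 t)) = true).
    { assert (w (t + 1)%nat = true) by (apply Hall; lia). rewrite Nat.add_1_r in H. exact H. }
    split.
    + rewrite E2, E1, plus_INR, S_INR. lra.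
    + unfold Sx, Mx in *. rewrite E1, E2, H3. cbn [orb].
      replace (INR (t + k + 1) - INR (ca w (S t) + k) - (INR t0 - c0)) with
        (INR t - INR (ca w (S t)) - (INR t0 - c0) + 1) by (rewrite !plus_INR; simpl; ring).
      replace (INR (S (cab w (S t))) - a0) with (INR (cab w (S t)) - a0 + 1) by (rewrite S_INR; ring).
      apply Hl; auto.
  - exists g. split; [|split]; auto. split; [exact HP1|]. apply (HB _ _ _ HP2).
Qed.

Definition caseR (k : nat) (b r : R) := forall z0, z0 <> (0,0) ->
  Un_cv (fun n => INR (cab (letter_a (zeta k) b z0) n) / INR n) (r / (1 + INR k * r)) /\
  Un_cv (fun n => INR (ca (letter_a (zeta k) b z0) n) / INR n) (INR k * r / (1 + INR k * r)).

Lemma case_ge2 k (Hk : (2 <= k)%nat) b : 2 <= b -> caseR k b 0.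
Proof.
  intros Hb. unfold caseR.
  apply (generic k Hk b 0 1 (fun z s m => m = 0 \/ (m = 1 /\
      ((fst z < 0 /\ (b - 1) * fst z <= snd z) \/ (fst z = 0 /\ 0 < snd z))))).
  - lra.
  - intros [x y] s m Hz HQ HF. rewrite Fmap_b in HF |- * by exact Hz. cbn [fst snd] in *.
    destruct HQ as [HQ|[Hm [[H1 H2]|[H1 H2]]]]; [left; auto|right|right].
    + split; auto. left. split; nra.
    + split; auto. subst x. left. split; nra.
  - intros [x y] s m Hz HQ HF. rewrite Fmap_b in HF |- * by exact Hz. unfold negz. cbn [fst snd] in *.
    apply in_a_false in Hz. apply in_a_true in HF.
    destruct HQ as [HQ|[Hm [[H1 H2]|[H1 H2]]]].
    + right. split; [lra|]. destruct Hz as [Hz|[Hz1 Hz2]]; [|subst x; destruct HF as [HF|[HF1 HF2]]; lra].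
      destruct HF as [HF|[HF1 HF2]]; [left; split; nra|right; split; lra].
    + exfalso. destruct HF as [HF|[HF1 HF2]]; nra.
    + exfalso. subst x. lra.
  - intros z s m [HQ|[HQ _]]; subst; rewrite Rmult_0_l, Rminus_0_l, ?Ropp_0, ?Rabs_R0, ?Rabs_Ropp, ?Rabs_R1; lra.
  - intros; left; reflexivity.
Qed.

Lemma case_le2 k (Hk : (2 <= k)%nat) b : b <= -2 -> caseR k b 1.
Proof.
  intros Hb. unfold caseR.
  apply (generic k Hk b 1 2 (fun z s m => 0 <= s - m /\ (s - m = 0 \/
      (s - m <= 1 /\ fst z < 0 /\ snd z < 0) \/
      (s - m <= 2 /\ fst z < 0 /\ 0 <= snd z /\ 2 * snd z <= b * fst z)))).
  - lra.
  - intros [x y] s m Hz HQ HF. rewrite Fmap_b in HF |- * by exact Hz. cbn [fst snd] in *.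
    apply in_a_false in Hz. apply in_a_false in HF.
    destruct HQ as [HD [HQ|[[H0 [H1 H2]]|[H0 [H1 [H2 H3]]]]]].
    + split; [lra|]. destruct Hz as [Hz|[Hz1 Hz2]].
      * right; left. split; [lra|]. split; [|lra]. destruct HF as [HF|[HF1 HF2]]; lra.
      * right; right. subst x. split; [lra|]. split; [lra|]. split; [lra|]. nra.
    + exfalso. destruct HF as [HF|[HF1 HF2]]; nra.
    + exfalso. destruct HF as [HF|[HF1 HF2]]; nra.
  - intros [x y] s m Hz HQ HF. rewrite Fmap_b in HF |- * by exact Hz. unfold negz. cbn [fst snd] in *.
    apply in_a_false in Hz. apply in_a_true in HF.
    replace (s + 1 - (m + 1)) with (s - m) by ring.
    destruct HQ as [HD [HQ|[[H0 [H1 H2]]|[H0 [H1 [H2 H3]]]]]].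
    + split; [lra|left; lra].
    + split; [lra|]. right; right. split; [lra|]. split; [nra|]. split; [lra|].
      assert (b * y >= 0) by nra. assert (b * b >= 4) by nra. nra.
    + split; [lra|]. right; right. split; [lra|]. split; [nra|]. split; [lra|].
      assert (b * y >= b * (b * x) / 2) by nra. assert (b * b >= 4) by nra. nra.
  - intros z s m [HD HQ]. rewrite Rmult_1_l. apply Rabs_le.
    destruct HQ as [HQ|[[H0 _]|[H0 _]]]; lra.
  - intros. split; [lra|left; lra].
Qed.

Section Angle.
Variable b : R.
Hypothesis Hb : -2 < b < 2.
Let phi := acos (b / 2).

Lemma phi_bounds : 0 < phi < PI.
Proof. apply acos_bound_lt. lra. Qed.
Lemma b_eq : b = 2 * cos phi.
Proof. unfold phi. rewrite cos_acos by lra. lra. Qed.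

Lemma rot_step C al : b * (C * sin al) - C * sin (al - phi) = C * sin (al + phi).
Proof. rewrite b_eq, sin_plus, sin_minus. ring. Qed.

Lemma sin_neg_range u : PI <= u < 2 * PI -> sin u <= 0.
Proof.
  intros H. destruct (Req_dec u PI) as [->|]. rewrite sin_PI; lra.
  apply Rlt_le, sin_lt_0; lra.
Qed.

Lemma polar x y : (x, y) <> (0,0) -> in_a (x, y) = false ->
  exists C th, 0 < C /\ PI <= th < 2 * PI /\ x = C * sin th /\ y = C * sin (th - phi).
Proof.
  intros Hz Hb'. pose proof phi_bounds as Hp. pose proof PI_RGT_0.
  assert (Hs : 0 < sin phi) by (apply sin_gt_0; lra).
  set (q := (x * cos phi - y) / sin phi).
  assert (Hxq : x <> 0 \/ q <> 0).
  { destruct (Req_dec x 0) as [->|]; auto. right. intros Hq. apply Hz. f_equal.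
    unfold q in Hq. assert (0 * cos phi - y = 0). { apply (Rmult_eq_reg_r (/ sin phi)). unfold Rdiv in Hq. lra. apply Rinv_neq_0_compat; lra. }
    lra. }
  set (C := sqrt (x * x + q * q)).
  assert (HC2 : 0 < x * x + q * q) by (destruct Hxq; [assert (0 < x*x) by (apply Rsqr_pos_lt; auto); nra | assert (0 < q*q) by (apply Rsqr_pos_lt; auto); nra]).
  assert (HC : 0 < C) by (apply sqrt_lt_R0; auto).
  assert (HCC : C * C = x * x + q * q) by (apply sqrt_sqrt; lra).
  set (u := q / C).
  assert (Hu : -1 <= u <= 1).
  { unfold u. assert (q * q <= C * C) by nra. split.
    - apply (Rmult_le_reg_r C); auto. unfold Rdiv. rewrite Rmult_assoc, Rinv_l by lra. nra.
    - apply (Rmult_le_reg_r C); auto. unfold Rdiv. rewrite Rmult_assoc, Rinv_l by lra. nra. }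
  assert (Hsq : sqrt (1 - u²) = Rabs x / C).
  { replace (1 - u²) with ((x / C)²) by (unfold u, Rsqr; field_simplify_eq; [nra|lra]).
    rewrite sqrt_Rsqr_abs. unfold Rdiv. rewrite Rabs_mult, Rabs_inv, (Rabs_right C) by lra. reflexivity. }
  set (th1 := if Rle_dec 0 x then acos u else - acos u).
  assert (Hsin : C * sin th1 = x).
  { unfold th1. destruct (Rle_dec 0 x).
    - rewrite sin_acos, Hsq by auto. rewrite Rabs_right by lra. field; lra.
    - rewrite sin_neg, sin_acos, Hsq by auto. rewrite Rabs_left by lra. field; lra. }
  assert (Hcos : C * cos th1 = q).
  { unfold th1. destruct (Rle_dec 0 x); rewrite ?cos_neg, cos_acos by auto; unfold u; field; lra. }
  assert (Hy : C * sin (th1 - phi) = y).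
  { rewrite sin_minus. replace (C * (sin th1 * cos phi - cos th1 * sin phi)) with
      ((C * sin th1) * cos phi - (C * cos th1) * sin phi) by ring. rewrite Hsin, Hcos. unfold q. field. lra. }
  assert (Hth1 : -PI <= th1 <= PI).
  { unfold th1. pose proof (acos_bound u). destruct (Rle_dec 0 x); lra. }
  apply in_a_false in Hb'.
  assert (Hnot : ~ (0 <= th1 < PI)).
  { intros [H1 H2]. destruct (Req_dec th1 0) as [E|E].
    - rewrite E in Hsin, Hy. rewrite sin_0 in Hsin. rewrite Rminus_0_l, sin_neg in Hy.
      assert (C * sin phi > 0) by (apply Rmult_gt_0_compat; lra).
      destruct Hb' as [Hb'|[Hb1 Hb2]]; lra.
    - assert (0 < sin th1) by (apply sin_gt_0; lra).
      assert (0 < C * sin th1) by (apply Rmult_lt_0_compat; lra).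
      destruct Hb' as [Hb'|[Hb1 Hb2]]; lra. }
  destruct (Rlt_dec th1 0).
  - exists C, (th1 + 2 * PI). split; auto. split; [lra|].
    rewrite !sin_plus, sin_2PI, cos_2PI.
    replace (th1 + 2 * PI - phi) with ((th1 - phi) + 2 * PI) by ring.
    rewrite sin_plus, sin_2PI, cos_2PI. split; [rewrite <- Hsin|rewrite <- Hy]; ring.
  - exists C, th1. split; auto. split; [lra|]. split; auto.
Qed.

Lemma case_mid k (Hk : (2 <= k)%nat) : caseR k b (phi / PI).
Proof.
  pose proof phi_bounds as Hp. pose proof PI_RGT_0 as HPI. unfold caseR.
  apply (generic k Hk b (phi / PI) 1 (fun z s m => exists th0 C al, PI <= th0 < 2 * PI /\ 0 < C /\
      PI <= al < 2 * PI /\ z = (C * sin al, C * sin (al - phi)) /\ al = th0 + phi * s - PI * m)).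
  - split. apply Rlt_le, Rdiv_lt_0_compat; lra.
    apply (Rmult_le_reg_r PI); auto. unfold Rdiv. rewrite Rmult_assoc, Rinv_l by lra. lra.
  - intros z s m Hz [th0 [C [al [H0 [HC [Hal [Ez Eal]]]]]]] HF. subst z.
    rewrite Fmap_b in HF |- * by exact Hz. rewrite rot_step in HF |- *.
    replace (C * sin al) with (C * sin (al + phi - phi)) by (f_equal; f_equal; ring).
    assert (Hlt : al + phi < 2 * PI).
    { destruct (Rlt_dec (al + phi) (2 * PI)); auto. exfalso.
      assert (Hs : sin (al + phi) = - sin (al + phi - PI)).
      { rewrite <- neg_sin. f_equal. ring. }
      pose proof (sin_neg_range (al + phi - PI) ltac:(lra)).
      assert (Hal2 : sin al < 0) by (apply sin_lt_0; lra).
      apply in_a_false in HF. rewrite Hs in HF. replace (al + phi - phi) with al in HF by ring.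
      destruct HF as [HF|[HF1 HF2]]; nra. }
    exists th0, C, (al + phi). split; auto. split; auto. split; [lra|]. split; auto. lra.
  - intros z s m Hz [th0 [C [al [H0 [HC [Hal [Ez Eal]]]]]]] HF. subst z.
    rewrite Fmap_b in HF |- * by exact Hz. rewrite rot_step in HF |- *.
    assert (Hge : 2 * PI <= al + phi).
    { destruct (Rlt_dec (al + phi) (2 * PI)); [|lra]. exfalso.
      assert (sin (al + phi) < 0) by (apply sin_lt_0; lra).
      apply in_a_true in HF. destruct HF as [HF|[HF1 HF2]]; nra. }
    exists th0, C, (al + phi - PI). split; auto. split; auto. split; [lra|]. split; [|lra].
    unfold negz. cbn [fst snd]. f_equal.
    + assert (E : sin (al + phi) = - sin (al + phi - PI)) by (rewrite <- neg_sin; f_equal; ring). rewrite E; ring.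
    + assert (E : sin al = - sin (al + phi - PI - phi)) by (rewrite <- neg_sin; f_equal; ring). rewrite E; ring.
  - intros z s m [th0 [C [al [H0 [HC [Hal [Ez Eal]]]]]]]. apply Rabs_le.
    replace (phi / PI * s - m) with ((al - th0) / PI) by (rewrite Eal; field; lra).
    split.
    + apply (Rmult_le_reg_r PI); auto. unfold Rdiv. rewrite Rmult_assoc, Rinv_l by lra. lra.
    + apply (Rmult_le_reg_r PI); auto. unfold Rdiv. rewrite Rmult_assoc, Rinv_l by lra. lra.
  - intros [x y] Hz Hb'. destruct (polar x y Hz Hb') as [C [th [HC [Hth [Ex Ey]]]]].
    exists th, C, th. repeat split; try lra. rewrite Ex, Ey. reflexivity.
Qed.
End Angle.

Lemma cv_ev (u v : nat -> R) l : Un_cv u l -> (forall n, (1 <= n)%nat -> v n = u n) -> Un_cv v l.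
Proof.
  intros H E eps Heps. destruct (H eps Heps) as [N HN]. exists (max N 1). intros n Hn.
  rewrite E by lia. apply HN; lia.
Qed.

Lemma cv_close (u v : nat -> R) l : Un_cv u l -> (forall n, Rabs (INR n * (v n - u n)) <= 1) -> Un_cv v l.
Proof.
  intros H Hb.
  assert (H0 : Un_cv (fun n => (INR n * (v n - u n)) / INR n) 0).
  { apply lim_aux. exists 1, 0%nat. intros n _. rewrite Rmult_0_l, Rminus_0_r. auto. }
  pose proof (CV_plus _ _ _ _ H H0) as H1. rewrite Rplus_0_r in H1.
  apply (cv_ev _ _ _ H1). intros n Hn. assert (0 < INR n) by (apply lt_0_INR; lia). field; lra.
Qed.

Lemma theta_r k (Hk : (2 <= k)%nat) b : exists r, 0 <= r <= 1 /\ caseR k b r /\ theta_val k b = r / (1 + INR k * r).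
Proof.
  pose proof PI_RGT_0. pose proof (pos_INR k).
  unfold theta_val. destruct (Rlt_dec 2 b).
  - exists 0. split; [lra|]. split. apply case_ge2; auto; lra. field; lra.
  - destruct (Rlt_dec b (-2)).
    + exists 1. split; [lra|]. split. apply case_le2; auto; lra. f_equal. ring.
    + destruct (Req_dec b 2) as [->|].
      * exists 0. split; [lra|]. split. apply case_ge2; auto; lra. replace (2/2) with 1 by field. rewrite acos_1. field; lra.
      * destruct (Req_dec b (-2)) as [->|].
        -- exists 1. split; [lra|]. split. apply case_le2; auto; lra.
           replace (-2/2) with (Ropp 1) by field. rewrite acos_opp, acos_1, Rminus_0_r. field; split; nra.
        -- pose proof (acos_bound (b/2)). exists (acos (b / 2) / PI). split.
           { split. apply Rmult_le_pos; [lra|apply Rlt_le, Rinv_0_lt_compat; lra].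
             apply (Rmult_le_reg_r PI); auto. unfold Rdiv. rewrite Rmult_assoc, Rinv_l by lra. lra. }
           split. apply case_mid; auto; lra.
           field. split; [lra|]. nra.
Qed.

Lemma cv_const c : Un_cv (fun _ => c) c.
Proof. intros eps H. exists 0%nat. intros. unfold R_dist. rewrite Rminus_diag, Rabs_R0. exact H. Qed.

Lemma negz_negz z : negz (negz z) = z.
Proof. destruct z; unfold negz; simpl; f_equal; ring. Qed.

Lemma half1 k (Hk : (2 <= k)%nat) b :
  (forall z0 : R * R, z0 <> (0, 0) -> Un_cv (theta_seq (zeta k) b z0) (theta_val k b)) /\
  Un_cv (rho_seq (zeta k) b) (INR k * theta_val k b).
Proof.
  destruct (theta_r k Hk b) as [r [Hr [Hc Ht]]].
  split.
  - intros z0 Hz. rewrite Ht. destruct (Hc z0 Hz) as [H1 _].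
    apply (cv_ev _ _ _ H1). intros n _. unfold theta_seq. rewrite count_ab_eq. reflexivity.
  - assert (Hp : (0, 1) <> (0,0)) by (intros E; injection E; lra).
    assert (Hm : (0, -1) <> (0,0)) by (intros E; injection E; lra).
    destruct (Hc _ Hp) as [_ H1]. destruct (Hc _ Hm) as [_ H2].
    pose proof (CV_plus _ _ _ _ H1 H2) as H3.
    pose proof (CV_mult _ _ _ _ H3 (cv_const (/2))) as H4.
    replace (INR k * theta_val k b) with ((INR k * r / (1 + INR k * r) + INR k * r / (1 + INR k * r)) * / 2)
      by (rewrite Ht; pose proof (pos_INR k); field; nra).
    apply (cv_ev _ _ _ H4). intros n Hn. unfold rho_seq. rewrite !count_a_eq.
    assert (0 < INR n) by (apply lt_0_INR; lia). field; lra.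
Qed.

Lemma cab_ext w v n : (forall t, w t = v t) -> cab w n = cab v n.
Proof. intros H. induction n; simpl; auto. rewrite IHn. destruct n; auto. rewrite !H. reflexivity. Qed.
Lemma ca_ext w v n : (forall t, w t = v t) -> ca w n = ca v n.
Proof. intros H. induction n; simpl; auto. rewrite IHn, H. reflexivity. Qed.

Lemma letter_swap a b z1 t : z1 <> (0,0) -> letter_a a b (negz z1) t = negb (letter_a b a z1 t).
Proof. apply letter_neg. Qed.

Lemma half2 l (Hl : (2 <= l)%nat) a :
  (forall z0 : R * R, z0 <> (0, 0) -> Un_cv (theta_seq a (zeta l) z0) (theta_val l a)) /\
  Un_cv (rho_seq a (zeta l)) (1 - INR l * theta_val l a).
Proof.
  destruct (half1 l Hl a) as [T1 T2]. split.
  - intros z0 Hz. set (z1 := negz z0).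
    assert (Hz1 : z1 <> (0,0)) by (apply neg_nz; auto).
    apply (cv_close _ _ _ (T1 z1 Hz1)). intros n.
    destruct n. simpl. rewrite Rmult_0_l, Rabs_R0. lra.
    unfold theta_seq. rewrite !count_ab_eq.
    assert (0 < INR (S n)) by (apply lt_0_INR; lia).
    replace (INR (S n) * (INR (cab (letter_a a (zeta l) z0) (S n)) / INR (S n) -
       INR (cab (letter_a (zeta l) a z1) (S n)) / INR (S n))) with
      (INR (cab (letter_a a (zeta l) z0) (S n)) - INR (cab (letter_a (zeta l) a z1) (S n))) by (field; lra).
    rewrite (cab_ext _ (fun t => negb (letter_a (zeta l) a z1 t))).
    + rewrite cab_neg, Rabs_minus_sym. apply cab_cba_R.
    + intros t. rewrite <- letter_swap by auto. unfold z1. rewrite negz_negz. reflexivity.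
  - pose proof (CV_minus _ _ _ _ (cv_const 1) T2) as H.
    apply (cv_ev _ _ _ H). intros n Hn. unfold rho_seq. rewrite !count_a_eq.
    assert (Hp : (0, 1) <> (0,0)) by (intros E; injection E; lra).
    assert (Hm : (0, -1) <> (0,0)) by (intros E; injection E; lra).
    assert (E1 : negz (0, -1) = (0, 1)) by (unfold negz; simpl; f_equal; ring).
    assert (E2 : negz (0, 1) = (0, -1)) by (unfold negz; simpl; f_equal; ring).
    rewrite (ca_ext (letter_a a (zeta l) (0,1)) (fun t => negb (letter_a (zeta l) a (0,-1) t)))
      by (intros t; rewrite <- letter_swap, E1 by auto; reflexivity).
    rewrite (ca_ext (letter_a a (zeta l) (0,-1)) (fun t => negb (letter_a (zeta l) a (0,1) t)))
      by (intros t; rewrite <- letter_swap, E2 by auto; reflexivity).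
    pose proof (ca_neg (letter_a (zeta l) a (0,-1)) n) as C1.
    pose proof (ca_neg (letter_a (zeta l) a (0,1)) n) as C2.
    apply (f_equal INR) in C1. apply (f_equal INR) in C2. rewrite plus_INR in C1, C2.
    assert (0 < INR n) by (apply lt_0_INR; lia).
    apply (Rmult_eq_reg_r (2 * INR n)); [|lra]. field_simplify; try lra.
Qed.

Theorem mainTheorem3 :
  (forall (k : nat), (2 <= k)%nat -> forall b : R,
     (forall z0 : R * R, z0 <> (0, 0) ->
        Un_cv (theta_seq (zeta k) b z0) (theta_val k b)) /\
     Un_cv (rho_seq (zeta k) b) (INR k * theta_val k b)) /\
  (forall (l : nat), (2 <= l)%nat -> forall a : R,
     (forall z0 : R * R, z0 <> (0, 0) ->
        Un_cv (theta_seq a (zeta l) z0) (theta_val l a)) /\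
     Un_cv (rho_seq a (zeta l)) (1 - INR l * theta_val l a)).
Proof. split; [apply half1|apply half2]. Qed.
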